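(* Let $\mathcal{P}=\{P_1,\ldots,P_n\}$, let $\mathcal{Q}\subseteq 2^{\mathcal{P}}$ and let $\mathcal{F}=\{F_1,\ldots,F_m\}\subseteq 2^{\mathcal{P}}$ be a fail-prone system, and set $\mathcal{F}^c=\{F_1^c,\ldots,F_m^c\}$. Let $I=\langle \xi_{\mathcal{Q}_{\bar X}},\ \xi_{\mathcal{Q}_{\bar Y}},\ \xi_{\mathcal{F}^c_{\bar Z}},\ \lambda,\ \delta'\rangle\subseteq\mathbb{B}(\bar X,\bar Y,\bar Z,\bar T)$, where $\delta'(\bar X,\bar Y,\bar Z,\bar T)=\prod_{i=1}^n(T_iX_iY_iZ_i+X_iY_iZ_i+1)$, and let $\mathcal{G}$ be a Gröbner basis for $I$. If $|SM(\mathcal{G})|=|\mathcal{Q}|^2\cdot|\mathcal{F}|\cdot|\mathcal{F}^*|$, then $\mathcal{Q}$ fulfills masking consistency with respect to $\mathcal{F}$, i.e. $(Q_1\cap Q_2)\setminus F_1\not\subseteq F_2$ for all $Q_1,Q_2\in\mathcal{Q}$ and all $F_1,F_2\in\mathcal{F}$.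
   Context: $\mathbb{B}=\mathbb{F}_2$; $\mathbb{B}(\bar X,\bar Y,\bar Z,\bar T)$ is the Boolean polynomial ring in $4n$ variables $X_i,Y_i,Z_i,T_i$ ($1\le i\le n$) over $\mathbb{F}_2$ modulo the relations $V^2=V$ for every variable $V$. $F^c=\mathcal{P}\setminus F$. $\varphi:2^{\mathcal{P}}\to\mathbb{B}^n$ sends a set to its indicator vector. For $S\subseteq\mathcal{P}$, $\xi_S(\bar W)=\prod_{i=1}^n(1+W_i+\varphi(S)_i)$; for $\mathcal{A}\subseteq 2^{\mathcal{P}}$, $\xi_{\mathcal{A}_{\bar W}}=\prod_{A\in\mathcal{A}}(\xi_A(\bar W)+1)$. $\gamma(\bar X,\bar Y)=\prod_{i=1}^n(X_iY_i+Y_i+1)+1$ and $\lambda(\bar T)=\prod_{F\in\mathcal{F}}\gamma(\varphi(F),\bar T)$. $\mathcal{F}^*=\{F'\subseteq F:F\in\mathcal{F}\}$. A fail-prone system is a collection of subsets of $\mathcal{P}$ none of which is contained in another. Monomial order: lexicographic with block order $\bar T<\bar Z<\bar Y<\bar X$ and within blocks $X_n\prec\cdots\prec X_1$ etc. A Gröbner basis of $I$ is a generating set $\mathcal{G}$ such that every nonzero $f\in I$ has leading monomial divisible by that of some $g\in\mathcal{G}$; $SM(\mathcal{G})$ is the set of multilinear monomials not in the ideal generated by the leading monomials of elements of $I$. *)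

(* Defs.v *)
From HB Require Import structures.
From mathcomp Require Import all_boot all_order all_algebra.
Set Implicit Arguments. Unset Strict Implicit. Unset Printing Implicit Defensive.
Import GRing.Theory.
Local Open Scope ring_scope.

(* The participants P = {P_1,...,P_n} are modelled by 'I_n (P_{i+1} <-> i). *)

(* Variables of B(X,Y,Z,T): pairs (block, index); block 0 = X, 1 = Y, 2 = Z, 3 = T. *)
Definition var_t (n : nat) := ('I_4 * 'I_n)%type.
Definition blkX : 'I_4 := @Ordinal 4 0 isT.
Definition blkY : 'I_4 := @Ordinal 4 1 isT.
Definition blkZ : 'I_4 := @Ordinal 4 2 isT.
Definition blkT : 'I_4 := @Ordinal 4 3 isT.

(* The Boolean polynomial ring F_2[vars]/(V^2 - V), each element represented by
   its unique multilinear representative: a multilinear monomial is a set of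
   variables, a Boolean polynomial is its coefficient function. *)
Definition mono (n : nat) := {set var_t n}.
Definition bpoly (n : nat) := {ffun mono n -> 'F_2}.

Section BoolPoly.
Variable n : nat.

(* zero and addition come from the Z-module structure of finite functions *)
Definition bone : bpoly n := [ffun S => (S == set0)%:R].
Definition bconst (c : 'F_2) : bpoly n := [ffun S => c * (S == set0)%:R].
Definition bmono (M : mono n) : bpoly n := [ffun S => (S == M)%:R].
Definition bvar (v : var_t n) : bpoly n := bmono [set v].
(* product: x_v^2 = x_v, i.e. monomials multiply by union *)
Definition bmul (p q : bpoly n) : bpoly n :=
  [ffun S => \sum_(A : mono n) \sum_(B : mono n | A :|: B == S) p A * q B].
Definition bprod (s : seq (bpoly n)) : bpoly n := foldr bmul bone s.

Definition Xv (i : 'I_n) := bvar (blkX, i).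
Definition Yv (i : 'I_n) := bvar (blkY, i).
Definition Zv (i : 'I_n) := bvar (blkZ, i).
Definition Tv (i : 'I_n) := bvar (blkT, i).

Definition phi (S : {set 'I_n}) (i : 'I_n) : 'F_2 := (i \in S)%:R.

Definition xi (W : 'I_n -> bpoly n) (S : {set 'I_n}) : bpoly n :=
  bprod [seq bone + W i + bconst (phi S i) | i <- enum 'I_n].
Definition xiFam (W : 'I_n -> bpoly n) (AA : {set {set 'I_n}}) : bpoly n :=
  bprod [seq xi W A + bone | A <- enum AA].

Definition gammaT (F : {set 'I_n}) : bpoly n :=
  bprod [seq bmul (bconst (phi F i)) (Tv i) + Tv i + bone | i <- enum 'I_n] + bone.
Definition lambdaT (FF : {set {set 'I_n}}) : bpoly n :=
  bprod [seq gammaT F | F <- enum FF].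
Definition delta' : bpoly n :=
  bprod [seq bmul (Tv i) (bmul (Xv i) (bmul (Yv i) (Zv i)))
             + bmul (Xv i) (bmul (Yv i) (Zv i)) + bone | i <- enum 'I_n].

Definition complFam (FF : {set {set 'I_n}}) : {set {set 'I_n}} :=
  [set ~: F | F in FF].
Definition downClosure (FF : {set {set 'I_n}}) : {set {set 'I_n}} :=
  [set F' : {set 'I_n} | [exists F in FF, F' \subset F]].
Definition fail_prone (FF : {set {set 'I_n}}) : Prop :=
  forall F1 F2, F1 \in FF -> F2 \in FF -> F1 \subset F2 -> F1 = F2.

Definition ideal (A : {set bpoly n}) : {set bpoly n} :=
  [set f | [exists h : {ffun bpoly n -> bpoly n}, f == \sum_(g in A) bmul (h g) g]].

(* monomial order: lex with T < Z < Y < X and X_n < ... < X_1 etc.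
   key v smaller <=> v larger variable *)
Definition vkey (v : var_t n) : nat := (v.1 * n + v.2)%N.
Definition mlt (M1 M2 : mono n) : bool :=
  [exists v, [&& v \in M2, v \notin M1 &
     [forall w, (vkey w < vkey v)%N ==> ((w \in M1) == (w \in M2))]]].
Definition isLM (f : bpoly n) (M : mono n) : bool :=
  (f M != 0) && [forall M', (f M' != 0) ==> (M' == M) || mlt M' M].

Definition groebner_basis (G I : {set bpoly n}) : Prop :=
  ideal G = I /\
  forall f, f \in I -> f != 0 ->
    exists g, exists Mg, exists Mf,
      [/\ g \in G, isLM g Mg, isLM f Mf & Mg \subset Mf].

Definition leadMonos (I : {set bpoly n}) : {set bpoly n} :=
  [set bmono M | M in [set M | [exists f in I, (f != 0) && isLM f M]]].
Definition SM (I : {set bpoly n}) : {set mono n} :=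
  [set M | bmono M \notin ideal (leadMonos I)].

Definition idealI (QQ FF : {set {set 'I_n}}) : {set bpoly n} :=
  ideal [set xiFam Xv QQ; xiFam Yv QQ; xiFam Zv (complFam FF);
             lambdaT FF; delta'].

Definition masking_consistent (QQ FF : {set {set 'I_n}}) : Prop :=
  forall Q1 Q2 F1 F2, Q1 \in QQ -> Q2 \in QQ -> F1 \in FF -> F2 \in FF ->
    ~~ ((Q1 :&: Q2) :\: F1 \subset F2).

End BoolPoly.

(* Main.v *)
Require Import Defs.
From mathcomp Require Import all_boot all_order all_algebra.
Set Implicit Arguments. Unset Strict Implicit. Unset Printing Implicit Defensive.
Import GRing.Theory.
Local Open Scope ring_scope.

Lemma F2_cases (x : 'F_2) : x = 0 \/ x = 1.
Proof. by case: x => [[|[|k]]] //= H; [left|right]; apply/val_inj. Qed.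
Lemma F2_11 : (1 + 1 : 'F_2) = 0. Proof. by apply/eqP. Qed.
Lemma F2_10 : (1 : 'F_2) != 0. Proof. by []. Qed.
Lemma F2_not (a : bool) : (1 + a%:R : 'F_2) = (~~ a)%:R.
Proof. by case: a; apply/eqP. Qed.
Lemma F2_eq (a b : bool) : (1 + a%:R + b%:R : 'F_2) = (a == b)%:R.
Proof. by case: a; case: b; apply/eqP. Qed.
Lemma F2_pow2 k : ((2 ^ k)%N%:R : 'F_2) = (k == 0%N)%:R.
Proof. case: k => [|k] //. by rewrite expnS natrM (_ : 2%:R = 0 :> 'F_2) ?mul0r //; apply/eqP. Qed.
Lemma F2_nat_inj (a b : bool) : (a%:R : 'F_2) = b%:R -> a = b.
Proof. by case: a; case: b => // /eqP. Qed.

Lemma sum_if1 (T : finType) (x : T) (Q : pred T) (c : 'F_2) :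
  \sum_(y : T) (if Q y && (x == y) then c else 0) = if Q x then c else 0.
Proof.
rewrite (bigD1 x) //= eqxx andbT big1 ?addr0 // => y /negbTE.
by rewrite eq_sym => ->; rewrite andbF.
Qed.

Lemma count_interval (T : finType) (L U : {set T}) :
  \sum_(A : {set T} | (L \subset A) && (A \subset U)) (1 : 'F_2) = (L == U)%:R.
Proof.
case LU: (L \subset U); last first.
  rewrite big1 => [|A /andP [LA AU]]; last by rewrite (subset_trans LA AU) in LU.
  case: eqP => // E; by rewrite E subxx in LU.
set S := (fun B => L :|: B) @: powerset (U :\: L).
rewrite (eq_bigl (mem S)); last first.
  move=> A /=; apply/idP/idP.
    move=> /andP [LA AU]; apply/imsetP; exists (A :\: L).
      by rewrite inE; apply: setSD.
    apply/eqP; rewrite eqEsubset; apply/andP; split; last by rewrite subUset LA subsetDl.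
    apply/subsetP => x xA.
    by rewrite !inE xA andbT; case: (x \in L).
  move=> /imsetP [B]; rewrite inE => BUL ->.
  rewrite subsetUl subUset LU /=; apply: subset_trans BUL _; exact: subsetDl.
rewrite sumr_const card_in_imset; last first.
  move=> B1 B2; rewrite !inE => H1 H2 E; apply/setP => x.
  move/setP: E => /(_ x); rewrite !inE.
  case xL: (x \in L) => /=.
    move/subsetP: H1 => /(_ x); move/subsetP: H2 => /(_ x); rewrite !inE xL /=.
    by move=> h2 h1 _; apply/idP/idP => h; [have := h1 h | have := h2 h].
  by [].
rewrite card_powerset -mulr_natr mul1r F2_pow2 cards_eq0 setD_eq0.
by rewrite eqEsubset LU.
Qed.

Section S.
Variable n : nat.
Implicit Types (f g h : bpoly n) (P S : mono n).

Definition ev P f : 'F_2 := \sum_(S : mono n | S \subset P) f S.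
Definition dlt P : bpoly n := [ffun S : mono n => (P \subset S)%:R].

Lemma bmulDl f1 f2 g : bmul (f1 + f2) g = bmul f1 g + bmul f2 g.
Proof.
apply/ffunP => S; rewrite !ffunE -big_split; apply eq_bigr => A _.
rewrite -big_split; apply eq_bigr => B _; by rewrite ffunE mulrDl.
Qed.

Lemma bmul0 g : bmul 0 g = 0.
Proof.
apply/ffunP => S; rewrite !ffunE big1 // => A _; rewrite big1 // => B _.
by rewrite ffunE mul0r.
Qed.

Lemma bmul1 g : bmul (bone n) g = g.
Proof.
apply/ffunP => S; rewrite ffunE (bigD1 set0) //= [X in _ + X]big1 ?addr0; last first.
  move=> A /negbTE An; rewrite big1 // => B _; by rewrite ffunE An mul0r.
rewrite (big_pred1 S); first by rewrite ffunE eqxx mul1r.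
by move=> B; rewrite /= set0U.
Qed.

Lemma evD P f g : ev P (f + g) = ev P f + ev P g.
Proof. rewrite /ev -big_split; apply eq_bigr => S _; by rewrite ffunE. Qed.

Lemma ev_expand P f g :
  ev P (bmul f g) = \sum_(S : mono n) \sum_(A : mono n) \sum_(B : mono n)
      (if (S \subset P) && (A :|: B == S) then f A * g B else 0).
Proof.
rewrite /ev big_mkcond; apply eq_bigr => S _; case: ifP => HS.
  rewrite ffunE; apply eq_bigr => A _; rewrite big_mkcond; apply eq_bigr => B _.
  by [].
by rewrite big1 // => A _; rewrite big1.
Qed.

Lemma evM P f g : ev P (bmul f g) = ev P f * ev P g.
Proof.
rewrite ev_expand exchange_big /ev big_distrlr /=.
rewrite [RHS]big_mkcond; apply eq_bigr => A _; rewrite exchange_big /=.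
case: ifP => HA.
  rewrite [RHS]big_mkcond; apply eq_bigr => B _.
  by rewrite sum_if1 subUset HA.
by rewrite big1 // => B _; rewrite sum_if1 subUset HA.
Qed.

Lemma ev_mono P M : ev P (bmono M) = (M \subset P)%:R.
Proof.
rewrite /ev; case MP: (M \subset P).
  rewrite (bigD1 M) //= big1 ?addr0; first by rewrite ffunE eqxx.
  by move=> S /andP [_ /negbTE SM]; rewrite ffunE SM.
by rewrite big1 // => S SP; rewrite ffunE; case: eqP => // E; rewrite -E SP in MP.
Qed.

Lemma ev_one P : ev P (bone n) = 1.
Proof.
have -> : bone n = bmono set0 by apply/ffunP => S; rewrite !ffunE.
by rewrite ev_mono sub0set.
Qed.

Lemma ev_const P c : ev P (bconst n c) = c.
Proof.
rewrite /ev (bigD1 set0) ?sub0set //= big1 ?addr0; first by rewrite ffunE eqxx mulr1.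
by move=> S /andP [_ /negbTE SM]; rewrite ffunE SM mulr0.
Qed.

Lemma ev_var P v : ev P (bvar v) = (v \in P)%:R.
Proof. by rewrite /bvar ev_mono sub1set. Qed.

Lemma ev_prod P s : ev P (bprod s) = \prod_(p <- s) ev P p.
Proof.
elim: s => [|p s IH]; first by rewrite big_nil ev_one.
by rewrite big_cons /= evM IH.
Qed.

Lemma inner_count P S B :
  \sum_(A : mono n) (if (A :|: B == S) && (P \subset A) then (1 : 'F_2) else 0)
  = ((B \subset P) && (P \subset S))%:R.
Proof.
rewrite -big_mkcond /=.
case BS: (B \subset S); last first.
  rewrite big_pred0; last first.
    move=> A; apply/negbTE/negP => /andP [/eqP E _]; by rewrite -E subsetUr in BS.
  case: (B \subset P) (P \subset S) (@subset_trans _ B P S) => [] [] //.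
  by move=> /(_ isT isT); rewrite BS.
rewrite (eq_bigl (fun A : mono n => (P :|: (S :\: B) \subset A) && (A \subset S))); last first.
  move=> A /=; apply/andP/andP.
    move=> [/eqP <- PA]; split; last exact: subsetUl.
    rewrite subUset PA /=; apply/subsetP => x; rewrite !inE.
    by case: (x \in B); rewrite /= ?orbF ?orbT.
  rewrite subUset => -[/andP [PA SBA] AS]; split => //.
  rewrite eqEsubset subUset AS BS /=; apply/subsetP => x xS; rewrite inE.
  case xB: (x \in B); first by rewrite orbT.
  by rewrite (subsetP SBA) // !inE xB xS.
rewrite count_interval.
suff -> : (P :|: S :\: B == S) = (B \subset P) && (P \subset S) by [].
apply/eqP/andP.
  move=> E; split; last by rewrite -E subsetUl.
  apply/subsetP => x xB; have := subsetP BS x xB; by rewrite -E !inE xB /= orbF.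
move=> [BP PS]; apply/eqP; rewrite eqEsubset subUset PS subsetDl /=.
apply/subsetP => x xS; rewrite !inE xS andbT.
by case xB: (x \in B) => /=; [rewrite (subsetP BP) | rewrite orbT].
Qed.

Lemma bmul_dlt P g S : bmul (dlt P) g S = ev P g * (P \subset S)%:R.
Proof.
rewrite ffunE.
transitivity (\sum_(A : mono n) \sum_(B : mono n)
   (if A :|: B == S then (P \subset A)%:R * g B else 0)).
  by apply eq_bigr => A _; rewrite big_mkcond; apply eq_bigr => B _; rewrite ffunE.
rewrite exchange_big /ev big_distrl /= [RHS]big_mkcond; apply eq_bigr => B _.
transitivity (g B * \sum_(A : mono n)
   (if (A :|: B == S) && (P \subset A) then (1 : 'F_2) else 0)).
  rewrite big_distrr /=; apply eq_bigr => A _.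
  by case: (A :|: B == S); case: (P \subset A); rewrite /= ?mulr1 ?mulr0 ?mul1r ?mul0r.
rewrite inner_count; case: (B \subset P); case: (P \subset S);
  by rewrite /= ?mulr1 ?mulr0 ?mul0r.
Qed.

Lemma ev_dlt P Q : ev Q (dlt P) = (P == Q)%:R.
Proof.
rewrite /ev (eq_bigr (fun S => if P \subset S then 1 else 0)); last first.
  by move=> S _; rewrite ffunE; case: (P \subset S).
rewrite -big_mkcondr /= -count_interval.
by apply eq_bigl => S; rewrite andbC.
Qed.


Lemma ideal0 (A : {set bpoly n}) : 0 \in ideal A.
Proof.
rewrite inE; apply/existsP; exists 0; rewrite big1 // => g _.
by rewrite ffunE bmul0.
Qed.

Lemma idealD (A : {set bpoly n}) f g :
  f \in ideal A -> g \in ideal A -> f + g \in ideal A.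
Proof.
rewrite !inE => /existsP [h1 /eqP ->] /existsP [h2 /eqP ->].
apply/existsP; exists (h1 + h2); rewrite -big_split /=; apply/eqP.
by apply eq_bigr => x _; rewrite ffunE bmulDl.
Qed.

Lemma ideal_mul (A : {set bpoly n}) g r : g \in A -> bmul r g \in ideal A.
Proof.
move=> gA; rewrite inE; apply/existsP.
exists [ffun g' => if g' == g then r else 0]; apply/eqP.
rewrite (bigD1 g) //= ffunE eqxx big1 ?addr0 // => g' /andP [_ /negbTE gg].
by rewrite ffunE gg bmul0.
Qed.

Lemma ideal_gen (A : {set bpoly n}) g : g \in A -> g \in ideal A.
Proof. by move=> gA; rewrite -(bmul1 g) ideal_mul. Qed.

Lemma interp f : f = \sum_(P | ev P f != 0) dlt P.
Proof.
apply/ffunP => S; rewrite sum_ffunE.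
transitivity (\sum_(P : mono n) ev P f * (P \subset S)%:R); last first.
  rewrite [RHS]big_mkcond; apply eq_bigr => P _; rewrite ffunE.
  by case: (F2_cases (ev P f)) => ->; rewrite ?mul0r ?mul1r.
rewrite /ev.
transitivity (\sum_(P : mono n) \sum_(T : mono n)
   (if T \subset P then f T * (P \subset S)%:R else 0)); last first.
  by apply eq_bigr => P _; rewrite big_distrl /= [RHS]big_mkcond.
rewrite exchange_big /=.
transitivity (\sum_(T : mono n) f T * (T == S)%:R).
  by rewrite (bigD1 S) //= eqxx mulr1 big1 ?addr0 // => T /negbTE ->; rewrite mulr0.
apply eq_bigr => T _; rewrite -count_interval big_distrr /= big_mkcond.
apply eq_bigr => P _.
by case: (T \subset P); case: (P \subset S); rewrite /= ?mulr1 ?mulr0.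
Qed.

Lemma nullst (V : {set mono n}) (A : {set bpoly n}) :
  (forall P, P \notin V -> exists2 g, g \in A & ev P g = 1) ->
  forall f, (forall P, P \in V -> ev P f = 0) -> f \in ideal A.
Proof.
move=> HV f Hf; rewrite [f]interp.
apply big_rec => [|P x Pf xI]; first exact: ideal0.
apply: idealD => //.
have PV : P \notin V by apply/negP => /Hf E; rewrite E eqxx in Pf.
have [g gA evg] := HV P PV.
have -> : dlt P = bmul (dlt P) g.
  by apply/ffunP => S; rewrite bmul_dlt evg mul1r ffunE.
exact: ideal_mul.
Qed.

End S.

Lemma prod_bool (T : Type) (r : seq T) (c : pred T) :
  \prod_(x <- r) ((c x)%:R : 'F_2) = (all c r)%:R.
Proof.
elim: r => [|x r IH]; first by rewrite big_nil.
by rewrite big_cons IH /=; case: (c x); rewrite ?mul1r ?mul0r.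
Qed.

Lemma F2_gam (a b : bool) : (a%:R * b%:R + b%:R + 1 : 'F_2) = (~~ b || a)%:R.
Proof. by case: a; case: b; apply/eqP. Qed.
Lemma F2_del (x y z t : bool) :
  (t%:R * (x%:R * (y%:R * z%:R)) + x%:R * (y%:R * z%:R) + 1 : 'F_2)
  = (~~ [&& x, y, z & ~~ t])%:R.
Proof. by case: x; case: y; case: z; case: t; apply/eqP. Qed.
Lemma F2_eq' (a b : bool) : (1 + a%:R + b%:R : 'F_2) = (a == b)%:R.
Proof. by case: a; case: b; apply/eqP. Qed.
Lemma F2_neg (a : bool) : (a%:R + 1 : 'F_2) = (~~ a)%:R.
Proof. by case: a; apply/eqP. Qed.
Lemma F2_add (a b : bool) : (a%:R + b%:R : 'F_2) = (a != b)%:R.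
Proof. by case: a; case: b; apply/eqP. Qed.
Lemma F2_xx (x : 'F_2) : x + x = 0.
Proof. by case: (F2_cases x) => ->; apply/eqP. Qed.

Section S.
Variable n : nat.
Implicit Types (f g h : bpoly n) (P S : mono n).

Definition part (b : 'I_4) P : {set 'I_n} := [set i | (b, i) \in P].

Lemma all_notin (T : finType) (x : T) (AA : {set T}) :
  all (fun A => x != A) (enum AA) = (x \notin AA).
Proof.
apply/allP/idP.
  move=> H; apply/negP => xA; have := H x; rewrite mem_enum xA eqxx.
  by move=> /(_ isT).
move=> nA A; rewrite mem_enum => AA'; apply/eqP => E; by rewrite E AA' in nA.
Qed.

Lemma ev_xi P b W A : (forall i, W i = bvar (b, i)) ->
  ev P (xi W A) = (part b P == A)%:R.
Proof.
move=> HW; rewrite /xi ev_prod big_map.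
rewrite (eq_bigr (fun i => ((((b, i) \in P) == (i \in A)))%:R)); last first.
  by move=> i _; rewrite !evD ev_one HW ev_var ev_const /phi F2_eq'.
rewrite prod_bool; apply: (congr1 (fun b : bool => (b%:R : 'F_2))); apply/allP/eqP.
  by move=> H; apply/setP => i; rewrite inE; apply/eqP/H; rewrite mem_enum.
by move=> <- i _; rewrite inE.
Qed.

Lemma ev_xiFam P b W AA : (forall i, W i = bvar (b, i)) ->
  ev P (xiFam W AA) = (part b P \notin AA)%:R.
Proof.
move=> HW; rewrite /xiFam ev_prod big_map.
rewrite (eq_bigr (fun A => (part b P != A)%:R)); last first.
  by move=> A _; rewrite evD (ev_xi _ _ HW) ev_one F2_neg.
by rewrite prod_bool all_notin.
Qed.

Lemma ev_gamma P F : ev P (gammaT F) = (~~ (part blkT P \subset F))%:R.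
Proof.
rewrite /gammaT evD ev_one ev_prod big_map.
rewrite (eq_bigr (fun i => (~~ ((blkT, i) \in P) || (i \in F))%:R)); last first.
  by move=> i _; rewrite !evD evM ev_const ev_one /Tv ev_var /phi F2_gam.
rewrite prod_bool F2_neg; apply: (congr1 (fun b : bool => ((~~ b)%:R : 'F_2))); apply/allP/subsetP.
  by move=> H i; rewrite inE => iP; have := H i (mem_enum _ i); rewrite iP.
by move=> H i _; case iP: ((blkT, i) \in P) => //=; apply: H; rewrite inE.
Qed.

Lemma ev_lambda P FF : ev P (lambdaT FF) = (part blkT P \notin downClosure FF)%:R.
Proof.
rewrite /lambdaT ev_prod big_map.
rewrite (eq_bigr (fun F : {set 'I_n} => (~~ (part blkT P \subset F))%:R)); last first.
  by move=> F _; rewrite ev_gamma.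
rewrite prod_bool inE; apply: (congr1 (fun b : bool => (b%:R : 'F_2))); apply/allP/negP.
  by move=> H /existsP [F /andP [FF' sub]]; have := H F; rewrite mem_enum FF' sub => /(_ isT).
move=> H F; rewrite mem_enum => FF'; apply/negP => sub; apply: H.
by apply/existsP; exists F; rewrite FF' sub.
Qed.

Lemma ev_delta P : ev P (delta' n) = (all (fun i => ~~ [&& (blkX, i) \in P,
   (blkY, i) \in P, (blkZ, i) \in P & (blkT, i) \notin P]) (enum 'I_n))%:R.
Proof.
rewrite /delta' ev_prod big_map -prod_bool; apply eq_bigr => i _.
by rewrite !evD !evM ev_one /Tv /Xv /Yv /Zv !ev_var F2_del.
Qed.

End S.

Section S.
Variable n : nat.

Definition enc (q : {set 'I_n} * {set 'I_n} * {set 'I_n} * {set 'I_n}) : mono n :=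
  [set v : var_t n | v.2 \in (if v.1 == blkX then q.1.1.1 else if v.1 == blkY then q.1.1.2
                              else if v.1 == blkZ then q.1.2 else q.2)].

Lemma enc_part (P : mono n) :
  P = enc (part blkX P, part blkY P, part blkZ P, part blkT P).
Proof.
apply/setP => -[b i]; rewrite !inE /=.
case: b => -[|[|[|[|k]]]] Hb //=; rewrite inE.
- by have -> : Ordinal Hb = blkX by apply/val_inj.
- by have -> : Ordinal Hb = blkY by apply/val_inj.
- by have -> : Ordinal Hb = blkZ by apply/val_inj.
- by have -> : Ordinal Hb = blkT by apply/val_inj.
Qed.

Lemma part_enc q :
  [/\ part blkX (enc q) = q.1.1.1, part blkY (enc q) = q.1.1.2,
      part blkZ (enc q) = q.1.2 & part blkT (enc q) = q.2].
Proof. by split; apply/setP => i; rewrite !inE. Qed.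

Definition pK (K : {set mono n}) : bpoly n := [ffun S => (S \in K)%:R].

Lemma SM_le_V (I : {set bpoly n}) (V : {set mono n}) :
  (forall f, f \in I -> f != 0 -> exists M, isLM f M) ->
  (forall f, (forall P, P \in V -> ev P f = 0) -> f \in I) ->
  (#|SM I| <= #|V|)%N.
Proof.
move=> gb nullI.
pose Phi K := [set P in V | ev P (pK K) == 1].
have inj : {in powerset (SM I) &, injective Phi}.
  move=> K1 K2; rewrite !inE => H1 H2 E.
  pose d := pK K1 + pK K2.
  have dI : d \in I.
    apply: nullI => P PV; rewrite evD.
    move/setP: E => /(_ P); rewrite !inE PV /=.
    case: (F2_cases (ev P (pK K1))) => ->; case: (F2_cases (ev P (pK K2))) => -> //;
      by move=> _; apply/eqP.
  have d0 : d = 0.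
    apply/eqP; apply/negP => /negP dnz.
    have [M LM] := gb d dI dnz; have /andP [dM _] := LM.
    have MSM : M \in SM I.
      move: dM; rewrite !ffunE F2_add.
      case M1: (M \in K1); first by move=> _; exact: (subsetP H1).
      case M2: (M \in K2); first by move=> _; exact: (subsetP H2).
      by [].
    move: MSM; rewrite inE => /negP; apply.
    apply: ideal_gen; apply/imsetP; exists M => //.
    by rewrite inE; apply/existsP; exists d; rewrite dI dnz LM.
  apply/setP => S; move/ffunP: d0 => /(_ S); rewrite !ffunE F2_add.
  by case: (S \in K1); case: (S \in K2) => // /eqP.
rewrite -(@leq_exp2l 2) // -!card_powerset -(card_in_imset inj).
apply: subset_leq_card; apply/subsetP => _ /imsetP [K _ ->].
by rewrite inE; apply/subsetP => P; rewrite inE => /andP [].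
Qed.
End S.

Lemma F2_nat0 (b : bool) : ((b%:R : 'F_2) == 0) = ~~ b.
Proof. by case: b. Qed.

Unset Implicit Arguments.

Theorem mainTheorem6 (n : nat) (QQ FF : {set {set 'I_n}}) (G : {set bpoly n}) :
  fail_prone FF ->
  groebner_basis G (idealI QQ FF) ->
  #|SM (idealI QQ FF)| = (#|QQ| ^ 2 * #|FF| * #|downClosure FF|)%N ->
  masking_consistent QQ FF.
Proof.
move=> _ [_ gb] Hcard Q1 Q2 F1 F2 Q1in Q2in F1in F2in; apply/negP => Hsub.
set gens := [set xiFam (Xv (n:=n)) QQ; xiFam (Yv (n:=n)) QQ;
   xiFam (Zv (n:=n)) (complFam FF); lambdaT FF; delta' n].
have Igens : idealI QQ FF = ideal gens by [].
pose V := [set P : mono n | [forall g in gens, ev P g == 0]].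
have HA : (#|SM (idealI QQ FF)| <= #|V|)%N.
  apply: SM_le_V.
    move=> f fI fnz; have [g [Mg [Mf [_ _ LM _]]]] := gb f fI fnz; by exists Mf.
  rewrite Igens; apply: nullst => P; rewrite inE => /forall_inPn [g gA evg].
  by exists g => //; case: (F2_cases (ev P g)) evg => ->.
pose D := setX (setX (setX QQ QQ) (complFam FF)) (downClosure FF).
have g1 : xiFam (Xv (n:=n)) QQ \in gens by rewrite !inE eqxx.
have g2 : xiFam (Yv (n:=n)) QQ \in gens by rewrite !inE eqxx ?orbT.
have g3 : xiFam (Zv (n:=n)) (complFam FF) \in gens by rewrite !inE eqxx ?orbT.
have g4 : lambdaT FF \in gens by rewrite !inE eqxx ?orbT.
have g5 : delta' n \in gens by rewrite !inE eqxx ?orbT.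
have HB : V \proper @enc n @: D.
  rewrite properE; apply/andP; split.
    apply/subsetP => P; rewrite inE => /forall_inP H.
    have := H _ g1; rewrite (ev_xiFam _ _ (b:=blkX)) //.
    have := H _ g2; rewrite (ev_xiFam _ _ (b:=blkY)) //.
    have := H _ g3; rewrite (ev_xiFam _ _ (b:=blkZ)) //.
    have := H _ g4; rewrite ev_lambda.
    rewrite !F2_nat0 !negbK => h4 h3 h2 h1.
    rewrite (enc_part P); apply: imset_f; rewrite !in_setX h1 h2 h3 h4.
    done.
  apply/subsetPn; exists (@enc n (Q1, Q2, ~: F1, F2)).
    apply: imset_f; rewrite !in_setX Q1in Q2in /= imset_f //=.
    by rewrite inE; apply/existsP; exists F2; rewrite F2in subxx.
  rewrite inE; apply/forall_inPn; exists (delta' n) => //.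
  rewrite ev_delta F2_nat0 negbK; apply/allP => i _; rewrite !inE /=.
  apply/negP => /and4P [a b c d]; have := subsetP Hsub i; rewrite !inE a b c /=.
  by move=> /(_ isT); rewrite (negbTE d).
have := leq_trans (leq_ltn_trans HA (proper_card HB)) (leq_imset_card (@enc n) D).
rewrite Hcard !cardsX /complFam card_imset; last exact: setC_inj.
by rewrite mulnn ltnn.
Qed.
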